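(* Let $\pi=\pi_1\pi_2\cdots\pi_n\in S_n$ be a permutation with exactly $k$ descents. For each $\mathscr H\in\mathcal H_{\{0,2\}}(\pi)$, the tuple $\varphi(\mathscr H)=(\widehat q_0(\mathscr H),\widehat q_1(\mathscr H),\ldots,\widehat q_k(\mathscr H))$ is a composition of $n-k$ into $k+1$ positive parts. The map $\varphi\colon\mathcal H_{\{0,2\}}(\pi)\to \mathrm{Comp}_{k+1}(n-k)$ is injective.
   Context: $S_n$ is the set of permutations of $[n]=\{1,\ldots,n\}$, written in one-line notation. A descent of $\pi$ is an index $i\in[n-1]$ with $\pi_i>\pi_{i+1}$. $\mathrm{Comp}_a(b)$ denotes the set of compositions of $b$ into $a$ positive parts. Diagram and hooks: the diagram of $\pi$ is the set of points $(i,\pi_i)$ in the plane. A hook $H$ is determined by indices $i<j$ with $\pi_i<\pi_j$; it is the union of the vertical segment from $(i,\pi_i)$ to $(i,\pi_j)$ and the horizontal segment from $(i,\pi_j)$ to $(j,\pi_j)$. Its southwest endpoint is ${}_eH=(i,\pi_i)$ and its northeast endpoint is $H^e=(j,\pi_j)$. Its top part is the segment from $(i+1/2,\pi_j)$ to $(j,\pi_j)$. Valid hook configurations: an $m$-tuple $\mathscr H=(H_1,\ldots,H_m)$ of hooks is a valid hook configuration of $\pi$ if: (a) if ${}_eH_\ell=(i_\ell,\pi_{i_\ell})$ then $i_1<i_2<\cdots<i_m$; (b) for every descent $i$ of $\pi$, $(i,\pi_i)={}_eH_\ell$ for some $\ell$; (c) if $(j,\pi_j)=H^e_\ell$ for some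 $\ell$, then there exist $\ell',\ell''$ such that the $x$-coordinate of ${}_eH_{\ell'}$ is a descent of $\pi$, ${}_eH_{\ell''}=(j-1,\pi_{j-1})$, and $H^e_{\ell'}=H^e_{\ell''}=(j,\pi_j)$; (d) if ${}_eH_\ell=(i,\pi_i)$, $H_\ell^e=(j,\pi_j)$, ${}_eH_{\ell'}=(i',\pi_{i'})$, $H_{\ell'}^e=(j',\pi_{j'})$, $\pi_j\le\pi_{j'}$ and $|[i,j]\cap[i',j']|>1$, then $[i,j]\subseteq[i',j']$. Let $NE(\mathscr H)=\{H_1^e,\ldots,H_m^e\}$, and $|\mathscr H|=m$. $\mathcal H_{\{0,2\}}(\pi)$ is the set of valid hook configurations of $\pi$ in which each point of $NE(\mathscr H)$ is the northeast endpoint of exactly two hooks. Coloring: given $\mathscr H=(H_1,\ldots,H_m)$, use colors $c_0,\ldots,c_m$, giving $H_\ell$ the color $c_\ell$. A point $(k,\pi_k)\notin NE(\mathscr H)$ is colored as follows: move upward from $(k,\pi_k)$ (ignoring any hook whose southwest endpoint is $(k,\pi_k)$) until hitting the top part of a hook, and give the point the color of that hook; if several hooks are hit at once, use the one whose southwest endpoint is farthest to the right; if no top part is hit, use $c_0$. A point $(k,\pi_k)\in NE(\mathscr H)$ gets color $c_r$ where $r$ is the largest index with $H_r^e=(k,\pi_k)$. Let $q_t(\mathscr H)$ be the number of points colored $c_t$. Let $\Theta(\mathscr H)$ be the set of $i\in\{0,1,\ldots,m\}$ such that $c_i$ is not the color of any point of $NE(\mathscr H)$; for $\mathscr H\in\mathcal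 H_{\{0,2\}}(\pi)$ with $\pi$ having $k$ descents, $|\Theta(\mathscr H)|=k+1$. Writing $\Theta(\mathscr H)=\{i_0<i_1<\cdots<i_k\}$, set $\widehat q_t(\mathscr H)=q_{i_t}(\mathscr H)$. *)

(* Defs.v *)
(* Conventions:
   - a permutation pi of [n] is a sequence s : seq nat with perm_eq s (iota 1 n);
     positions are 1-based: pi_i = pv s i = nth 0 s (i-1).
   - a hook is a pair (i, j) of positions (southwest x-coord, northeast x-coord).
   - a hook configuration (H_1,...,H_m) is a seq of hooks; H_l = nth (0,0) H (l-1). *)
From mathcomp Require Import all_boot.
Set Implicit Arguments. Unset Strict Implicit. Unset Printing Implicit Defensive.

Definition pv (s : seq nat) (i : nat) : nat := nth 0 s i.-1.

Definition is_descent (s : seq nat) (i : nat) : bool :=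
  (1 <= i < size s) && (pv s i > pv s i.+1).

Definition ndesc (s : seq nat) : nat := count (is_descent s) (iota 1 (size s)).

Definition is_hook (s : seq nat) (h : nat * nat) : bool :=
  (1 <= h.1) && (h.1 < h.2) && (h.2 <= size s) && (pv s h.1 < pv s h.2).

Definition hk (H : seq (nat * nat)) (l : nat) : nat * nat := nth (0, 0) H l.-1.
Definition sw (H : seq (nat * nat)) (l : nat) : nat := (hk H l).1.
Definition ne (H : seq (nat * nat)) (l : nat) : nat := (hk H l).2.

Definition idx (H : seq (nat * nat)) : seq nat := iota 1 (size H).

Definition inter_card (n a b c d : nat) : nat :=
  count (fun x => (a <= x <= b) && (c <= x <= d)) (iota 1 n).

Definition is_VHC (s : seq nat) (H : seq (nat * nat)) : bool :=
  let n := size s in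
  all (is_hook s) H &&
  sorted ltn (map fst H) &&
  all (fun i => is_descent s i ==> has (fun l => sw H l == i) (idx H)) (iota 1 n) &&
  all (fun l => let j := ne H l in
        has (fun l' => is_descent s (sw H l') && (ne H l' == j)) (idx H) &&
        has (fun l'' => (sw H l'' == j.-1) && (ne H l'' == j)) (idx H)) (idx H) &&
  (* (d), read with pi_j < pi_j' (i.e. distinct NE endpoints) *)
  all (fun l => all (fun l' =>
        (pv s (ne H l) < pv s (ne H l')) &&
        (1 < inter_card n (sw H l) (ne H l) (sw H l') (ne H l'))
        ==> (sw H l' <= sw H l) && (ne H l <= ne H l')) (idx H)) (idx H).

Definition inNE (H : seq (nat * nat)) (x : nat) : bool :=
  has (fun l => ne H l == x) (idx H).

Definition is_VHC02 (s : seq nat) (H : seq (nat * nat)) : bool :=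
  is_VHC s H &&
  all (fun l => count (fun l' => ne H l' == ne H l) (idx H) == 2) (idx H).

(* moving upward from (k, pi_k), the top part of hook l (from (i+1/2, pi_j) to
   (j, pi_j)) is hit *)
Definition hits (s : seq nat) (H : seq (nat * nat)) (k l : nat) : bool :=
  (sw H l != k) && (sw H l < k <= ne H l) && (pv s k < pv s (ne H l)).

Definition has_color (s : seq nat) (H : seq (nat * nat)) (k t : nat) : bool :=
  if inNE H k then
    (t \in idx H) && (ne H t == k) &&
    all (fun l => (ne H l == k) ==> (l <= t)) (idx H)
  else if ~~ has (hits s H k) (idx H) then t == 0
  else (t \in idx H) && hits s H k t &&
       all (fun l => hits s H k l ==>
             ((pv s (ne H t) < pv s (ne H l)) ||
              ((pv s (ne H t) == pv s (ne H l)) && (sw H l <= sw H t)))) (idx H).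

Definition q (s : seq nat) (H : seq (nat * nat)) (t : nat) : nat :=
  count (fun k => has_color s H k t) (iota 1 (size s)).

Definition Theta (s : seq nat) (H : seq (nat * nat)) : seq nat :=
  [seq t <- iota 0 (size H).+1 |
     ~~ has (fun k => inNE H k && has_color s H k t) (iota 1 (size s))].

Definition phi (s : seq nat) (H : seq (nat * nat)) : seq nat :=
  map (q s H) (Theta s H).

Definition is_comp (a b : nat) (c : seq nat) : bool :=
  (size c == a) && all (fun x => 0 < x) c && (sumn c == b).

(* Main.v *)
Require Import Defs.
From mathcomp Require Import all_boot zify.
Set Implicit Arguments. Unset Strict Implicit. Unset Printing Implicit Defensive.

Lemma count_subset_uniq (T : eqType) (P : pred T) (s1 s2 : seq T) :
  uniq s1 -> {subset s1 <= s2} -> count P s1 <= count P s2.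
Proof.
move=> u sub; rewrite -!size_filter; apply: uniq_leq_size; first exact: filter_uniq.
by move=> x; rewrite !mem_filter => /andP[-> /sub].
Qed.

Lemma uniq_map_inj (T1 T2 : eqType) (f : T1 -> T2) (s : seq T1) :
  uniq (map f s) -> {in s &, injective f}.
Proof.
elim: s => //= x s IH /andP[nx u] a b; rewrite !inE => /orP[/eqP->|ha] /orP[/eqP->|hb] e //.
- by rewrite e (map_f f hb) in nx.
- by rewrite -e (map_f f ha) in nx.
- exact: IH.
Qed.

Lemma cnt_one (T : eqType) (P : pred T) (s : seq T) (t0 : T) :
  uniq s -> t0 \in s -> P t0 -> (forall t, t \in s -> P t -> t = t0) -> count P s = 1.
Proof.
move=> u t0s Pt0 un.
rewrite (@eq_in_count _ _ (pred1 t0)); first by rewrite count_uniq_mem // t0s.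
move=> t ts /=; apply/idP/eqP => [|->//]; exact: un.
Qed.

Lemma count_le_in (T : eqType) (P Q : pred T) (l : seq T) :
  {in l, forall x, P x -> Q x} -> count P l <= count Q l.
Proof.
elim: l => //= x l IH sub.
have IH' : count P l <= count Q l by apply: IH => w wl; apply: sub; rewrite inE wl orbT.
case Px: (P x); first by rewrite (sub x) ?inE ?eqxx //= ltnS.
by case: (Q x) => /=; lia.
Qed.

Lemma count_lt (T : eqType) (P Q : pred T) (l : seq T) :
  {in l, forall x, P x -> Q x} -> (exists2 y, y \in l & Q y && ~~ P y) ->
  count P l < count Q l.
Proof.
elim: l => [_ [y]//|x l IH] sub [y]; rewrite inE => /orP[/eqP->|yl] /andP[Qy nPy] /=.
- rewrite Qy (negbTE nPy) add0n add1n ltnS.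
  by apply: count_le_in => w wl; apply: sub; rewrite inE wl orbT.
- have IH' : count P l < count Q l.
    by apply: IH; [move=> w wl; apply: sub; rewrite inE wl orbT|exists y => //; rewrite Qy nPy].
  case Px: (P x); first by rewrite (sub x) ?inE ?eqxx //= ltnS.
  by case: (Q x) => /=; lia.
Qed.

Lemma hkH (H : seq (nat * nat)) : map (hk H) (idx H) = H.
Proof.
rewrite /idx /hk -[1]/(1 + 0) iotaDl -map_comp.
rewrite (eq_map (_ : _ =1 nth (0,0) H)) //.
by rewrite -/(mkseq _ _) mkseq_nth.
Qed.

Lemma mem_hk H l : l \in idx H -> hk H l \in H.
Proof. by move=> li; have := map_f (hk H) li; rewrite hkH. Qed.

Lemma hk_ex H h : h \in H -> exists2 l, l \in idx H & hk H l = h.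
Proof. by rewrite -{1}(hkH H) => /mapP[l li ->]; exists l. Qed.

Lemma hk_pair H l : hk H l = (sw H l, ne H l).
Proof. by rewrite /sw /ne; case: (hk H l). Qed.

Lemma idxP H l : (l \in idx H) = (1 <= l <= size H).
Proof. by rewrite /idx mem_iota; lia. Qed.

Lemma pv_inj (s : seq nat) (i j : nat) : uniq s -> 1 <= i <= size s -> 1 <= j <= size s ->
  pv s i = pv s j -> i = j.
Proof.
move=> u hi hj e.
have h1 : i.-1 < size s by lia.
have h2 : j.-1 < size s by lia.
have := @nth_uniq _ 0 s i.-1 j.-1 h1 h2 u; rewrite -/(pv s i) -/(pv s j) e eqxx => /esym/eqP.
lia.
Qed.

Definition Free (s : seq nat) (H : seq (nat * nat)) (d j x : nat) : bool :=
  (d < x < j) && all (fun h => (is_descent s h.1 && (d < h.1 < j)) ==> ~~ (h.1 < x <= h.2)) H.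


Ltac clean_ctx := repeat match goal with
 | h : is_true (is_VHC02 _ _) |- _ => clear h
 | h : is_true (_ \in _) |- _ => clear h
 | h : is_true (uniq _) |- _ => clear h
 | h : is_true (is_descent _ _) |- _ => clear h
 | h : is_true (~~ is_descent _ _) |- _ => clear h
 | h : is_true (all _ _) |- _ => clear h
 | h : is_true (has _ _) |- _ => clear h
 | h : is_true (~~ has _ _) |- _ => clear h
 | h : is_true (Free _ _ _ _ _) |- _ => clear h
 | h : is_true (hits _ _ _ _) |- _ => clear h
 | h : is_true (inNE _ _) |- _ => clear h
 | h : is_true (~~ inNE _ _) |- _ => clear h
 | h : is_true (has_color _ _ _ _) |- _ => clear h
 | h : is_true (perm_eq _ _) |- _ => clear h
 | h : forall _, _ |- _ => clear h
 | h : _ = false |- _ => clear h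
 end.
Ltac slia := clean_ctx; lia.

Lemma V_hooks (s : seq nat) (H : seq (nat * nat)) : is_VHC02 s H -> all (is_hook s) H.
Proof. by rewrite /is_VHC02 /is_VHC => /andP[/andP[/andP[/andP[/andP[-> _] _] _] _] _]. Qed.
Lemma V_sorted (s : seq nat) (H : seq (nat * nat)) : is_VHC02 s H -> sorted ltn (map fst H).
Proof. by rewrite /is_VHC02 /is_VHC => /andP[/andP[/andP[/andP[/andP[_ ->] _] _] _] _]. Qed.
Lemma V_b (s : seq nat) (H : seq (nat * nat)) : is_VHC02 s H ->
  all (fun i => is_descent s i ==> has (fun l => sw H l == i) (idx H)) (iota 1 (size s)).
Proof. by rewrite /is_VHC02 /is_VHC => /andP[/andP[/andP[/andP[/andP[_ _] ->] _] _] _]. Qed.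
Lemma V_c (s : seq nat) (H : seq (nat * nat)) : is_VHC02 s H ->
  all (fun l => let j := ne H l in
        has (fun l' => is_descent s (sw H l') && (ne H l' == j)) (idx H) &&
        has (fun l'' => (sw H l'' == j.-1) && (ne H l'' == j)) (idx H)) (idx H).
Proof. by rewrite /is_VHC02 /is_VHC => /andP[/andP[/andP[/andP[/andP[_ _] _] ->] _] _]. Qed.
Lemma V_d (s : seq nat) (H : seq (nat * nat)) : is_VHC02 s H ->
  all (fun l => all (fun l' =>
        (pv s (ne H l) < pv s (ne H l')) &&
        (1 < inter_card (size s) (sw H l) (ne H l) (sw H l') (ne H l'))
        ==> (sw H l' <= sw H l) && (ne H l <= ne H l')) (idx H)) (idx H).
Proof. by rewrite /is_VHC02 /is_VHC => /andP[/andP[/andP[/andP[/andP[_ _] _] _] ->] _]. Qed.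
Lemma V_cnt (s : seq nat) (H : seq (nat * nat)) : is_VHC02 s H ->
  all (fun l => count (fun l' => ne H l' == ne H l) (idx H) == 2) (idx H).
Proof. by rewrite /is_VHC02 => /andP[_ ->]. Qed.

Lemma hookP (s : seq nat) (H : seq (nat * nat)) (a : nat) (b : nat) : is_VHC02 s H -> (a, b) \in H ->
  [/\ 1 <= a, a < b, b <= size s & pv s a < pv s b].
Proof.
move=> /V_hooks /allP hh /hh; rewrite /is_hook /= => /andP[/andP[/andP[-> ->] ->] ->].
by [].
Qed.

Lemma hk_mem (s : seq nat) (H : seq (nat * nat)) (l : nat) : is_VHC02 s H -> l \in idx H -> (sw H l, ne H l) \in H.
Proof. by move=> _ li; rewrite -hk_pair mem_hk. Qed.

Lemma fstE (s : seq nat) (H : seq (nat * nat)) (h : nat * nat) (h' : nat * nat) : is_VHC02 s H -> h \in H -> h' \in H -> h.1 = h'.1 -> h = h'.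
Proof.
move=> /V_sorted so; have u : uniq (map fst H) by apply: sorted_uniq so; [exact: ltn_trans | exact: ltnn].
move=> hh hh' e; exact: (uniq_map_inj u hh hh' e).
Qed.

Lemma sw_lt (s : seq nat) (H : seq (nat * nat)) (l : nat) (l' : nat) : is_VHC02 s H -> l \in idx H -> l' \in idx H -> l < l' -> sw H l < sw H l'.
Proof.
move=> /V_sorted so; rewrite !idxP => hl hl' ll.
have := @sorted_ltn_nth _ ltn ltn_trans 0 _ so l.-1 l'.-1.
have h1 : l.-1 < size H by slia.
have h2 : l'.-1 < size H by slia.
rewrite !inE size_map !(nth_map (0,0)) // /sw /hk; apply => //; slia.
Qed.

Lemma sw_inj (s : seq nat) (H : seq (nat * nat)) (l : nat) (l' : nat) : is_VHC02 s H -> l \in idx H -> l' \in idx H -> sw H l = sw H l' -> l = l'.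
Proof.
move=> hV hl hl' e; case: (ltngtP l l') => // c.
- by have := sw_lt hV hl hl' c; rewrite e ltnn.
- by have := sw_lt hV hl' hl c; rewrite e ltnn.
Qed.

Lemma sw_lt_inv (s : seq nat) (H : seq (nat * nat)) (l : nat) (l' : nat) : is_VHC02 s H -> l \in idx H -> l' \in idx H -> sw H l < sw H l' -> l < l'.
Proof.
move=> hV hl hl' e; case: (ltngtP l l') => // c.
- by have := sw_lt hV hl' hl c; slia.
- by move: e; rewrite c ltnn.
Qed.

Lemma descH (s : seq nat) (H : seq (nat * nat)) (i : nat) : is_VHC02 s H -> is_descent s i -> exists b, (i, b) \in H.
Proof.
move=> hV di; have := allP (V_b hV) i; rewrite mem_iota di.
move: (di); rewrite /is_descent => /andP[/andP[i1 i2] _].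
have -> : 1 <= i < 1 + size s by slia.
move=> /(_ isT) /implyP /(_ isT) /hasP[l li /eqP e]; exists (ne H l); rewrite -e; exact: (hk_mem hV).
Qed.

Lemma ex_idx (s : seq nat) (H : seq (nat * nat)) (a : nat) (b : nat) : is_VHC02 s H -> (a, b) \in H ->
  exists2 l, l \in idx H & (sw H l = a /\ ne H l = b).
Proof. by move=> _ /hk_ex[l li e]; exists l => //; rewrite /sw /ne e. Qed.

Lemma partnerA (s : seq nat) (H : seq (nat * nat)) (a : nat) (b : nat) : is_VHC02 s H -> (a, b) \in H ->
  exists2 a', is_descent s a' & (a', b) \in H.
Proof.
move=> hV /(ex_idx hV)[l li [ea eb]].
have /andP[/hasP[l' l'i /andP[d /eqP e]] _] := allP (V_c hV) l li.
by exists (sw H l') => //; rewrite -eb -e; exact: (hk_mem hV).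
Qed.

Lemma partnerB (s : seq nat) (H : seq (nat * nat)) (a : nat) (b : nat) : is_VHC02 s H -> (a, b) \in H -> (b.-1, b) \in H.
Proof.
move=> hV /(ex_idx hV)[l li [ea eb]].
have /andP[_ /hasP[l' l'i /andP[/eqP e1 /eqP e]]] := allP (V_c hV) l li.
rewrite -eb -e1 -e; exact: (hk_mem hV).
Qed.

Lemma nestH (s : seq nat) (H : seq (nat * nat)) (a : nat) (b : nat) (c : nat) (d : nat) : is_VHC02 s H -> (a, b) \in H -> (c, d) \in H ->
  pv s b < pv s d -> 1 < inter_card (size s) a b c d -> c <= a /\ b <= d.
Proof.
move=> hV /(ex_idx hV)[l li [ea eb]] /(ex_idx hV)[l' l'i [ec ed]] h1 h2.
have := allP (allP (V_d hV) l li) l' l'i; rewrite ea eb ec ed h1 h2 /=.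
by move=> /andP[-> ->].
Qed.

Lemma cnt2 (s : seq nat) (H : seq (nat * nat)) (a : nat) (b : nat) : is_VHC02 s H -> (a, b) \in H -> count (fun h => h.2 == b) H = 2.
Proof.
move=> hV /(ex_idx hV)[l li [ea eb]].
have := allP (V_cnt hV) l li => /eqP <-.
have -> : count (fun h => h.2 == b) H = count (fun h => h.2 == b) (map (hk H) (idx H)) by rewrite hkH.
rewrite count_map -eb.
by apply: eq_count => l' /=; rewrite /ne.
Qed.

Lemma descP (s : seq nat) (i : nat) : is_descent s i = [&& 1 <= i, i < size s & pv s i.+1 < pv s i].
Proof. by rewrite /is_descent andbA. Qed.

Lemma B_notdesc (s : seq nat) (H : seq (nat * nat)) (b : nat) : is_VHC02 s H -> (b.-1, b) \in H -> ~~ is_descent s b.-1.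
Proof.
move=> hV /(hookP hV)[h1 h2 h3 h4]; rewrite descP; apply/negP => /and3P[_ _].
by rewrite (_ : b.-1.+1 = b) ?ltnNge ?(ltnW h4) //; slia.
Qed.

Lemma three_contra (s : seq nat) (H : seq (nat * nat)) (a : nat) (b : nat) (c : nat) (d : nat) (e : nat) (f : nat) (P : nat) : is_VHC02 s H -> (a, b) \in H ->
  uniq [:: (c, d); (e, f); (P, b)] -> (c, d) \in H -> (e, f) \in H -> (P, b) \in H ->
  d = b -> f = b -> False.
Proof.
move=> hV hab u h1 h2 h3 ed ef; subst d f.
have e2 := cnt2 hV hab.
have := @count_subset_uniq _ (fun h => h.2 == b) _ H u.
rewrite /= eqxx /= e2 => le; suff: 3 <= 2 by []; apply: le => x; rewrite !inE => /or3P[] /eqP-> //.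
Qed.

Lemma typeH (s : seq nat) (H : seq (nat * nat)) (a : nat) (b : nat) : is_VHC02 s H -> (a, b) \in H -> is_descent s a || (a == b.-1).
Proof.
move=> hV hab; case: (partnerA hV hab) => a' da' ha'.
have hB := partnerB hV hab; have nB := B_notdesc hV hB.
case da: (is_descent s a) => //=; apply/negPn/negP => nab; apply: (three_contra hV hab _ hab ha' hB) => //.
rewrite /= !inE !xpair_eqE !eqxx !andbT; apply/andP; split.
- apply/negP => /orP[] /eqP e; first by rewrite e da' in da.
  by rewrite e eqxx in nab.
- apply/negP => /eqP e; by rewrite -e da' in nB.
Qed.

Lemma Auniq (s : seq nat) (H : seq (nat * nat)) (a : nat) (a' : nat) (b : nat) : is_VHC02 s H -> (a, b) \in H -> (a', b) \in H ->
  is_descent s a -> is_descent s a' -> a = a'.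
Proof.
move=> hV hab ha' da da'; apply/eqP/negPn/negP => ne_.
have hB := partnerB hV hab; have nB := B_notdesc hV hB.
apply: (three_contra hV hab _ hab ha' hB) => //.
rewrite /= !inE !xpair_eqE !eqxx !andbT; apply/andP; split.
- apply/negP => /orP[] /eqP e; first by rewrite e eqxx in ne_.
  by rewrite -e da in nB.
- apply/negP => /eqP e; by rewrite -e da' in nB.
Qed.

Lemma inter2 (n : nat) (a : nat) (b : nat) (c : nat) (d : nat) (y : nat) : 1 <= y -> y.+1 <= n -> a <= y -> y.+1 <= b -> c <= y -> y.+1 <= d ->
  1 < inter_card n a b c d.
Proof.
move=> h1 h2 h3 h4 h5 h6; rewrite /inter_card.
have u : uniq [:: y; y.+1] by rewrite /= inE; apply/andP; split => //; slia.
have := @count_subset_uniq _ (fun x => (a <= x <= b) && (c <= x <= d)) _ (iota 1 n) u.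
have -> : count (fun x => (a <= x <= b) && (c <= x <= d)) [:: y; y.+1] = 2.
  rewrite /=; have -> : (a <= y <= b) && (c <= y <= d) by apply/andP; split; slia.
  by have -> : (a <= y.+1 <= b) && (c <= y.+1 <= d) by apply/andP; split; slia.
apply=> x; rewrite !inE mem_iota => /orP[] /eqP ->; slia.
Qed.

Lemma Below (s : seq nat) (H : seq (nat * nat)) (a : nat) (b : nat) (y : nat) : uniq s -> is_VHC02 s H -> (a, b) \in H -> a < y < b -> pv s y < pv s b.
Proof.
move=> us hV hab hy; have [h1 h2 h3 h4] := hookP hV hab.
rewrite ltnNge; apply/negP => le; have lt : pv s b < pv s y.
  rewrite ltn_neqAle le andbT; apply/negP => /eqP e.
  have : y = b by apply: (pv_inj us); [slia|slia|by rewrite e].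
  slia.
pose P z := (a < z < b) && (pv s b < pv s z).
have exP : exists z, P z by exists y; rewrite /P hy lt.
have ubP : forall z, P z -> z <= b by move=> z /andP[]; slia.
case: (ex_maxnP exP ubP) => z /andP[hz lz] mz.
have dz : is_descent s z.
  rewrite descP; apply/and3P; split; try slia.
  case: (ltngtP z.+1 b) => c; first 1 last; [slia| by rewrite c|].
  have : ~~ P z.+1 by apply/negP => /mz; slia.
  rewrite /P negb_and; have -> : a < z.+1 < b by slia.
  by rewrite /= -leqNgt => le'; apply: leq_ltn_trans le' lz.
have [c hc] := descH hV dz; have [_ zc _ pzc] := hookP hV hc.
have [] : z <= a /\ b <= c by apply: (nestH hV hab hc (ltn_trans lz pzc)); apply: (inter2 (y:=z)); slia.
slia.
Qed.

Lemma Nest (s : seq nat) (H : seq (nat * nat)) (a : nat) (j : nat) (c : nat) (e : nat) : uniq s -> is_VHC02 s H -> (a, j) \in H -> (c, e) \in H ->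
  is_descent s a -> is_descent s c -> a < c < j -> e < j.
Proof.
move=> us hV haj hce da dc hc.
have [a1 aj jn paj] := hookP hV haj; have [c1 ce en pce] := hookP hV hce.
case: (ltngtP (pv s j) (pv s e)) => cmp.
- have [] : c <= a /\ j <= e by apply: (nestH hV haj hce cmp); apply: (inter2 (y:=c)); slia.
  slia.
- have [_ ej] : a <= c /\ e <= j by apply: (nestH hV hce haj cmp); apply: (inter2 (y:=c)); slia.
  rewrite ltn_neqAle ej andbT; apply/negP => /eqP eqej.
  by move: cmp; rewrite eqej ltnn.
- have eqej : j = e by apply: (pv_inj us); [slia|slia|done].
  rewrite -eqej in hce; have := Auniq hV haj hce da dc; slia.
Qed.

Lemma inNEP (s : seq nat) (H : seq (nat * nat)) (x : nat) : is_VHC02 s H ->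
  reflect (exists a, (a, x) \in H) (inNE H x).
Proof.
move=> hV; apply: (iffP hasP) => [[l li /eqP e]|[a /(ex_idx hV)[l li [_ e]]]].
- by exists (sw H l); rewrite -e; exact: (hk_mem hV).
- by exists l => //; rewrite e.
Qed.

Lemma desc_lt (s : seq nat) (H : seq (nat * nat)) (a b : nat) : is_VHC02 s H -> (a, b) \in H ->
  is_descent s a -> a < b.-1.
Proof.
move=> hV hab da; have [h1 h2 h3 h4] := hookP hV hab.
have hB := partnerB hV hab; have nB := B_notdesc hV hB.
rewrite ltn_neqAle; apply/andP; split; last by slia.
by apply/negP => /eqP e; rewrite e in da; rewrite da in nB.
Qed.

Lemma Free_notNE (s : seq nat) (H : seq (nat * nat)) (d j x : nat) : uniq s -> is_VHC02 s H ->
  (d, j) \in H -> is_descent s d -> Free s H d j x -> ~~ inNE H x.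
Proof.
move=> us hV hdj dd /andP[hx /allP fr]; apply/negP => /(inNEP _ hV)[a' ha'].
have [a da ha] := partnerA hV ha'.
have [d1 dj jn _] := hookP hV hdj; have [a1 ax xn _] := hookP hV ha.
have px := Below us hV hdj hx.
have [dle xle] : d <= a /\ x <= j by apply: (nestH hV ha hdj px); apply: (inter2 (y:=x.-1)); slia.
have nad : a != d.
  apply/negP => /eqP e; subst a; have := fstE hV hdj ha erefl; case; slia.
have := fr _ ha; rewrite /= da /=; have -> : d < a < j by slia.
by rewrite /= ax leqnn.
Qed.

Lemma hitsA (s : seq nat) (H : seq (nat * nat)) (x l : nat) : is_VHC02 s H -> ~~ inNE H x ->
  l \in idx H -> hits s H x l -> is_descent s (sw H l) && (sw H l < x < ne H l).
Proof.
move=> hV nx li /andP[/andP[_ /andP[h1 h2]] _].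
have xne : x != ne H l by apply/negP => /eqP e; move/negP: nx; apply; apply/hasP; exists l; rewrite ?e.
have := typeH hV (hk_mem hV li) => /orP[-> /=|/eqP e]; first by slia.
slia.
Qed.

Lemma HC_A (s : seq nat) (H : seq (nat * nat)) (t x : nat) : uniq s -> is_VHC02 s H ->
  t \in idx H -> is_descent s (sw H t) -> has_color s H x t = Free s H (sw H t) (ne H t) x.
Proof.
move=> us hV ti dt; have ht := hk_mem hV ti.
move: dt ht; move Ed: (sw H t) => d; move Ej: (ne H t) => j dt ht.
have [d1 dj jn pdj] := hookP hV ht.
have FrNE := @Free_notNE s H d j x us hV ht dt.
rewrite /has_color Ed Ej; case: ifP => nex.
  have -> : Free s H d j x = false by apply/negP => /FrNE; rewrite nex.
  apply/negP => /andP[/andP[_ /eqP ex] /allP al].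
  have hB := partnerB hV ht; have [lB lBi [swB neB]] := ex_idx hV hB.
  have := al lB lBi; rewrite neB -ex eqxx /= => lBt.
  have := sw_lt_inv hV ti lBi; rewrite swB Ed; have := desc_lt hV ht dt => h /(_ h).
  slia.
case: ifP => nh.
  have -> : Free s H d j x = false.
    apply/negP => fr; move/negP: nh; apply; apply/hasP; exists t => //.
    move: (fr) => /andP[hx _]; rewrite /hits Ed Ej (Below us hV ht hx) andbT.
    apply/andP; split; slia.
  by apply/negP => /eqP t0; move: ti; rewrite t0 idxP.
apply/idP/idP.
- move=> /andP[/andP[_ /andP[/andP[dx /andP[dx' xj]] pxj]] /allP al].
  have xnj : x != j by apply/negP => /eqP e; move: nex; rewrite e => /negbT/negP; apply; apply/hasP; exists t => //; rewrite Ej.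
  have hx : d < x < j by slia.
  rewrite /Free hx /=; apply/allP => [[a b]] hab /=; apply/implyP => /andP[da hda]; apply/negP => axb.
  have [l li [swl nel]] := ex_idx hV hab.
  have xnb : x != b by apply/negP => /eqP e; move: nex; rewrite e => /negbT/negP; apply; apply/(inNEP _ hV); exists a.
  have hl : hits s H x l.
    rewrite /hits swl nel; apply/andP; split; first by apply/andP; split; slia.
    apply: (Below us hV hab); slia.
  have := al l li; rewrite hl /= swl nel => /orP[pjb|/andP[_ ad]]; last by slia.
  have [a1 ab bn _] := hookP hV hab.
  have [] : a <= d /\ j <= b by apply: (nestH hV ht hab pjb); apply: (inter2 (y:=a)); slia.
  slia.
- move=> fr; move: (fr) => /andP[hx /allP frall].
  have nx : ~~ inNE H x by apply: FrNE.
  rewrite ti /= /hits Ed Ej (Below us hV ht hx) andbT.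
  apply/andP; split; first by apply/andP; split; slia.
  apply/allP => l li; apply/implyP => hl.
  have /andP[dl hl'] := hitsA hV nx li hl.
  have hl2 := hk_mem hV li.
  have [a1 ab bn pab] := hookP hV hl2.
  case: (ltngtP (pv s j) (pv s (ne H l))) => cmp //.
  + have [dle ble] : d <= sw H l /\ ne H l <= j.
      by apply: (nestH hV hl2 ht cmp); apply: (inter2 (y:=x.-1)); slia.
    have nad : sw H l != d.
      apply/negP => /eqP e; have := fstE hV hl2 ht e; case=> _ e2; by move: cmp; rewrite e2 ltnn.
    have := frall _ hl2; rewrite /= dl /=; have -> : d < sw H l < j by slia.
    by rewrite /=; have -> : sw H l < x <= ne H l by slia.
  + have ebj : j = ne H l by apply: (pv_inj us); [slia|slia|done].
    rewrite -ebj in hl2.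
    by rewrite (Auniq hV hl2 ht dl dt) leqnn.
Qed.

Lemma HC_NE (s : seq nat) (H : seq (nat * nat)) (t x : nat) : is_VHC02 s H ->
  inNE H x -> has_color s H x t -> [&& t \in idx H, ~~ is_descent s (sw H t) & ne H t == x].
Proof.
move=> hV nex; rewrite /has_color nex => /andP[/andP[ti ex] /allP al].
rewrite ti ex andbT /=; apply/negP => dt.
have ht := hk_mem hV ti.
have hB := partnerB hV ht; have [lB lBi [swB neB]] := ex_idx hV hB.
have := al lB lBi; rewrite neB ex /= => lBt.
have := sw_lt_inv hV ti lBi; rewrite swB; have := desc_lt hV ht dt => h /(_ h).
slia.
Qed.

Lemma HC_Bcol (s : seq nat) (H : seq (nat * nat)) (t : nat) : is_VHC02 s H ->
  t \in idx H -> ~~ is_descent s (sw H t) -> inNE H (ne H t) && has_color s H (ne H t) t.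
Proof.
move=> hV ti nd; have ht := hk_mem hV ti.
have nNE : inNE H (ne H t) by apply/hasP; exists t.
have est : sw H t = (ne H t).-1 by have := typeH hV ht; rewrite (negbTE nd) => /eqP.
rewrite nNE /has_color nNE ti eqxx /=; apply/allP => l li; apply/implyP => /eqP el.
have hl := hk_mem hV li; rewrite el in hl.
have := typeH hV hl => /orP[dl|/eqP esl].
- have := desc_lt hV hl dl => lt; apply: ltnW; apply: (sw_lt_inv hV li ti); slia.
- by rewrite (sw_inj hV li ti) // esl est.
Qed.

Lemma HC_uniq (s : seq nat) (H : seq (nat * nat)) (x t t' : nat) : is_VHC02 s H ->
  has_color s H x t -> has_color s H x t' -> t = t'.
Proof.
move=> hV; rewrite /has_color; case: ifP => _.
  move=> /andP[/andP[ti /eqP et] /allP al] /andP[/andP[ti' /eqP et'] /allP al'].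
  have := al t' ti'; have := al' t ti; rewrite et et' eqxx /=; slia.
case: ifP => _; first by move=> /eqP -> /eqP ->.
move=> /andP[/andP[ti ht] /allP al] /andP[/andP[ti' ht'] /allP al'].
have := al t' ti'; have := al' t ti; rewrite ht ht' /=.
case: (ltngtP (pv s (ne H t)) (pv s (ne H t'))) => //= _ h1 h2.
apply: (sw_inj hV ti ti'); apply/eqP; rewrite eqn_leq h1 h2.
by [].
Qed.

Lemma HC_exist (s : seq nat) (H : seq (nat * nat)) (x : nat) : uniq s -> is_VHC02 s H ->
  ~~ inNE H x -> exists2 t, has_color s H x t & (t == 0) || ((t \in idx H) && is_descent s (sw H t)).
Proof.
move=> us hV nx.
case nh: (has (hits s H x) (idx H)); last first.
  by exists 0; rewrite // /has_color (negbTE nx) nh.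
move/hasP: nh => [l li hl]; have /andP[dl hxl] := hitsA hV nx li hl.
pose P d := has (fun h => (h.1 == d) && is_descent s d && (d < x < h.2)) H.
have exP : exists d, P d.
  exists (sw H l); apply/hasP; exists (sw H l, ne H l); first exact: (hk_mem hV).
  by rewrite /= eqxx dl hxl.
have ubP : forall d, P d -> d <= x by move=> d /hasP[h _ /andP[_]]; slia.
case: (ex_maxnP exP ubP) => d0 /hasP[[d1 j0] h0 /andP[/andP[/eqP /= e1 dd0] hx0]] mx.
subst d1.
have [t ti [swt net]] := ex_idx hV h0.
exists t; last by rewrite ti swt dd0 orbT.
rewrite (HC_A x us hV ti); rewrite swt ?net //.
rewrite /Free hx0 /=; apply/allP => [[a b]] hab /=; apply/implyP => /andP[da hda]; apply/negP => axb.
have xnb : x != b by apply/negP => /eqP e; move/negP: nx; apply; apply/(inNEP _ hV); exists a; rewrite e.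
have : P a by apply/hasP; exists (a, b) => //=; rewrite eqxx da /=; slia.
move/mx; slia.
Qed.

Lemma HC_one (s : seq nat) (H : seq (nat * nat)) : is_VHC02 s H -> has_color s H 1 0.
Proof.
move=> hV; rewrite /has_color.
have -> : inNE H 1 = false.
  by apply/negP => /(inNEP _ hV)[a /(hookP hV)[]]; slia.
have -> : has (hits s H 1) (idx H) = false.
  apply/negP => /hasP[l li /andP[/andP[_ /andP[h _]] _]].
  have [] := hookP hV (hk_mem hV li); slia.
by [].
Qed.

Lemma ThetaE (s : seq nat) (H : seq (nat * nat)) : uniq s -> is_VHC02 s H ->
  Theta s H = 0 :: filter (fun t => is_descent s (sw H t)) (idx H).
Proof.
move=> us hV; rewrite /Theta /=.
have -> : has (fun k => inNE H k && has_color s H k 0) (iota 1 (size s)) = false.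
  apply/negP => /hasP[k _ /andP[nk hk]]; have := HC_NE hV nk hk; by rewrite idxP.
congr (_ :: _); apply: eq_in_filter => t ti.
apply/idP/idP.
- apply: contraR => nd; apply/hasP; exists (ne H t).
    have [] := hookP hV (hk_mem hV ti); rewrite mem_iota; slia.
  exact: HC_Bcol.
- move=> dt; apply/negP => /hasP[k _ /andP[nk hk]]; have := HC_NE hV nk hk.
  by rewrite dt /= andbF.
Qed.

Definition AH (s : seq nat) (H : seq (nat * nat)) := filter (fun h => is_descent s h.1) H.

Lemma uniqH (s : seq nat) (H : seq (nat * nat)) : is_VHC02 s H -> uniq H.
Proof.
move=> hV; apply: (@map_uniq _ _ fst); apply: sorted_uniq (V_sorted hV); [exact: ltn_trans|exact: ltnn].
Qed.

Lemma filt_idx (s : seq nat) (H : seq (nat * nat)) :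
  map (hk H) (filter (fun t => is_descent s (sw H t)) (idx H)) = AH s H.
Proof. by rewrite /AH -[X in _ = filter _ X](hkH H) filter_map. Qed.

Lemma desc_range (s : seq nat) (i : nat) : is_descent s i -> i \in iota 1 (size s).
Proof. rewrite descP mem_iota => /and3P[]; slia. Qed.

Lemma sizeAH (s : seq nat) (H : seq (nat * nat)) : is_VHC02 s H -> size (AH s H) = ndesc s.
Proof.
move=> hV; rewrite /ndesc -size_filter -(size_map fst); apply: perm_size.
apply: uniq_perm.
- rewrite /AH -filter_map; apply: filter_uniq; apply: sorted_uniq (V_sorted hV); [exact: ltn_trans|exact: ltnn].
- by apply: filter_uniq; apply: iota_uniq.
- move=> d; rewrite mem_filter; apply/mapP/andP => [[[a b]]|[dd _]].
  + by rewrite /AH mem_filter /= => /andP[da _] ->; split => //; exact: desc_range.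
  + have [b hb] := descH hV dd; exists (d, b) => //; by rewrite /AH mem_filter dd.
Qed.

Lemma cntNE (s : seq nat) (H : seq (nat * nat)) : is_VHC02 s H ->
  count (inNE H) (iota 1 (size s)) = size (AH s H).
Proof.
move=> hV; rewrite -size_filter -(size_map snd); apply: perm_size.
apply: uniq_perm.
- by apply: filter_uniq; apply: iota_uniq.
- rewrite map_inj_in_uniq; first by apply: filter_uniq; exact: uniqH hV.
  move=> [a b] [a' b'] /=; rewrite /AH !mem_filter /= => /andP[da ha] /andP[da' ha'] e; subst b'.
  by rewrite (Auniq hV ha ha' da da').
- move=> x; rewrite mem_filter; apply/andP/mapP => [[/(inNEP _ hV)[a ha] _]|[[a b]]].
  + have [a' da' ha'] := partnerA hV ha; exists (a', x) => //; by rewrite /AH mem_filter da'.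
  + rewrite /AH mem_filter /= => /andP[da ha] ->; split; first by apply/(inNEP _ hV); exists a.
    have [] := hookP hV ha; rewrite mem_iota; slia.
Qed.

Lemma sumn_add (T : Type) (f g : T -> nat) (X : seq T) :
  sumn (map (fun x => f x + g x) X) = sumn (map f X) + sumn (map g X).
Proof. elim: X => //= x X ->; slia. Qed.

Lemma sumn_count (T : Type) (P : pred T) (X : seq T) : sumn (map (fun x => nat_of_bool (P x)) X) = count P X.
Proof. by elim: X => //= x X ->. Qed.

Lemma sum_exch (T1 T2 : Type) (P : T1 -> T2 -> bool) (X : seq T1) (T : seq T2) :
  sumn (map (fun t => count (fun x => P x t) X) T) = sumn (map (fun x => count (P x) T) X).
Proof.
elim: T => /= [|t T IH]; first by elim: X.
rewrite IH (sumn_add (fun x => nat_of_bool (P x t)) (fun x => count (P x) T)) sumn_count.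
by [].
Qed.

Lemma uniqTheta (s : seq nat) (H : seq (nat * nat)) : uniq (Theta s H).
Proof. by apply: filter_uniq; apply: iota_uniq. Qed.

Lemma cnt_col (s : seq nat) (H : seq (nat * nat)) (x : nat) : uniq s -> is_VHC02 s H ->
  count (has_color s H x) (Theta s H) = ~~ inNE H x.
Proof.
move=> us hV; case nx: (inNE H x) => /=.
- rewrite (@eq_in_count _ _ pred0) ?count_pred0 // => t.
  rewrite ThetaE // inE mem_filter => tT; apply/negP => hc.
  have /and3P[ti nd _] := HC_NE hV nx hc.
  by move: tT => /orP[/eqP t0|/andP[dt _]]; [move: ti; rewrite t0 idxP | rewrite dt in nd].
- have [t0 h0 t0T] := HC_exist us hV (negbT nx).
  apply: (cnt_one (uniqTheta s H) _ h0).
  + by rewrite ThetaE // inE mem_filter andbC.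
  + move=> t _ ht; exact: (HC_uniq hV ht h0).
Qed.

Lemma comp_part (n : nat) (s : seq nat) (H : seq (nat * nat)) :
  0 < n -> perm_eq s (iota 1 n) -> is_VHC02 s H ->
  is_comp (ndesc s).+1 (n - ndesc s) (phi s H).
Proof.
move=> n0 ps hV; have us : uniq s by rewrite (perm_uniq ps) iota_uniq.
have sz : size s = n by rewrite (perm_size ps) size_iota.
apply/andP; split; [apply/andP; split|].
- by rewrite /phi size_map ThetaE //= -(size_map (hk H)) filt_idx sizeAH.
- rewrite /phi ThetaE //=; apply/andP; split.
    rewrite /q -has_count; apply/hasP; exists 1; last exact: HC_one.
    by rewrite mem_iota sz; slia.
  apply/allP => y /mapP[t]; rewrite mem_filter => /andP[dt ti] ->.
  rewrite /q (eq_count (a2 := Free s H (sw H t) (ne H t))); last by move=> x; apply: HC_A.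
  rewrite -has_count; apply/hasP; exists (sw H t).+1.
    have ht := hk_mem hV ti; have := desc_lt hV ht dt; have [] := hookP hV ht.
    rewrite mem_iota; slia.
  have ht := hk_mem hV ti; have := desc_lt hV ht dt => lt.
  rewrite /Free; apply/andP; split; first slia.
  by apply/allP => [[a b]] _ /=; apply/implyP => /andP[_ /andP[h _]]; rewrite ltnNge h.
- rewrite /phi /q (sum_exch (fun x t => has_color s H x t)).
  rewrite (@eq_map _ _ _ (fun x => nat_of_bool (~~ inNE H x))); last by move=> x; apply: cnt_col.
  rewrite sumn_count -sz.
  have e := count_predC (inNE H) (iota 1 (size s)); rewrite size_iota cntNE // sizeAH // in e.
  change (count (predC (inNE H)) (iota 1 (size s)) == size s - ndesc s).
  apply/eqP; move: e; clear; lia.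
Qed.

Definition FH (s : seq nat) (H : seq (nat * nat)) (h : nat * nat) : nat :=
  count (Free s H h.1 h.2) (iota 1 (size s)).

Lemma phiE (s : seq nat) (H : seq (nat * nat)) : uniq s -> is_VHC02 s H ->
  phi s H = q s H 0 :: map (FH s H) (AH s H).
Proof.
move=> us hV; rewrite /phi ThetaE //= -filt_idx -map_comp; congr (_ :: _).
apply/eq_in_map => t; rewrite mem_filter => /andP[dt ti] /=.
rewrite /q /FH /=; apply: eq_count => x.
by rewrite (HC_A x us hV ti dt).
Qed.

Lemma mapfstAH (s : seq nat) (H : seq (nat * nat)) : is_VHC02 s H ->
  map fst (AH s H) = filter (is_descent s) (iota 1 (size s)).
Proof.
move=> hV; apply: (irr_sorted_eq ltn_trans ltnn).
- rewrite /AH -filter_map; apply: sorted_filter (V_sorted hV); exact: ltn_trans.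
- apply: sorted_filter (iota_ltn_sorted _ _); exact: ltn_trans.
- move=> d; rewrite mem_filter; apply/mapP/andP => [[[a b]]|[dd _]].
  + by rewrite /AH mem_filter /= => /andP[da _] ->; split => //; exact: desc_range.
  + have [b hb] := descH hV dd; exists (d, b) => //; by rewrite /AH mem_filter dd.
Qed.

Lemma FH_match (s : seq nat) (H H' : seq (nat * nat)) (a j j' : nat) : uniq s ->
  is_VHC02 s H -> is_VHC02 s H' -> phi s H = phi s H' ->
  (a, j) \in H -> (a, j') \in H' -> is_descent s a -> FH s H (a, j) = FH s H' (a, j').
Proof.
move=> us hV hV' e haj haj' da.
move: e; rewrite !phiE // => -[_ e].
have mA : (a, j) \in AH s H by rewrite /AH mem_filter da.
have mA' : (a, j') \in AH s H' by rewrite /AH mem_filter da.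
set i := index (a, j) (AH s H).
have ilt : i < size (AH s H) by rewrite index_mem.
have szE : size (AH s H) = size (AH s H') by rewrite !sizeAH.
have ilt' : i < size (AH s H') by rewrite -szE.
have f1 : (nth (0,0) (AH s H') i).1 = a.
  have := congr1 (fun l => nth 0 l i) (etrans (mapfstAH hV) (esym (mapfstAH hV'))).
  by rewrite /= !(nth_map (0,0)) // nth_index.
have mem' : nth (0,0) (AH s H') i \in H'.
  by have := mem_nth (0,0) ilt'; rewrite /AH mem_filter => /andP[].
have e2 : nth (0,0) (AH s H') i = (a, j') by apply: (fstE hV' mem' haj').
have := congr1 (fun l => nth 0 l i) e; rewrite /= !(nth_map (0,0)) // nth_index // e2.
by [].
Qed.

Lemma FH_lt (s : seq nat) (H H' : seq (nat * nat)) (a j j' : nat) : uniq s ->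
  is_VHC02 s H -> is_VHC02 s H' ->
  (forall c e, is_descent s c -> a < c -> ((c, e) \in H) = ((c, e) \in H')) ->
  (a, j) \in H -> (a, j') \in H' -> is_descent s a -> j < j' -> FH s H (a, j) < FH s H' (a, j').
Proof.
move=> us hV hV' ag haj haj' da jj.
have [a1 aj jn _] := hookP hV haj.
rewrite /FH /=; apply: count_lt.
- move=> x _ /andP[hx /allP fr]; rewrite /Free /=; apply/andP; split; first by slia.
  apply/allP => [[c e]] hce /=; apply/implyP => /andP[dc hc]; apply/negP => cxe.
  have hce2 : (c, e) \in H by rewrite ag //; slia.
  have := fr _ hce2; rewrite /= dc /=; have -> : a < c < j by slia.
  by rewrite /= cxe.
- exists j; first by rewrite mem_iota; slia.
  rewrite /Free /= ltnn andbF andbT; apply/andP; split; first by slia.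
  apply/allP => [[c e]] hce /=; apply/implyP => /andP[dc hc]; apply/negP => cje.
  have hce2 : (c, e) \in H by rewrite ag //; slia.
  have := Nest us hV haj hce2 da dc; slia.
Qed.

Lemma agreeA (s : seq nat) (H H' : seq (nat * nat)) : uniq s ->
  is_VHC02 s H -> is_VHC02 s H' -> phi s H = phi s H' ->
  forall a b, is_descent s a -> ((a, b) \in H) = ((a, b) \in H').
Proof.
move=> us hV hV' e.
suff : forall k a, size s - a <= k -> is_descent s a -> forall b, ((a, b) \in H) = ((a, b) \in H').
  move=> h a b da; exact: (h (size s - a) a (leqnn _) da b).
elim=> [|k IH] a ha da.
  by move: da; rewrite descP => /and3P[]; slia.
have ag : forall c e, is_descent s c -> a < c -> ((c, e) \in H) = ((c, e) \in H').
  move=> c e0 dc ac; apply: IH => //; move: dc; rewrite descP => /and3P[]; slia.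
have [j haj] := descH hV da; have [j' haj'] := descH hV' da.
have jj : j = j'.
  case: (ltngtP j j') => // c.
  - have := FH_lt us hV hV' ag haj haj' da c; rewrite (FH_match us hV hV' e haj haj' da) ltnn.
    by [].
  - have ag' : forall c e, is_descent s c -> a < c -> ((c, e) \in H') = ((c, e) \in H).
      by move=> c0 e0 dc ac; rewrite ag.
    have := FH_lt us hV' hV ag' haj' haj da c; rewrite (FH_match us hV hV' e haj haj' da) ltnn.
    by [].
subst j'; move=> b; apply/idP/idP => hb.
- by rewrite -(fstE hV haj hb erefl).
- by rewrite -(fstE hV' haj' hb erefl).
Qed.

Lemma mem_agree (s : seq nat) (H H' : seq (nat * nat)) : is_VHC02 s H -> is_VHC02 s H' ->
  (forall a b, is_descent s a -> ((a, b) \in H) = ((a, b) \in H')) -> {subset H <= H'}.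
Proof.
move=> hV hV' ag [a b] hab.
have := typeH hV hab => /orP[da|/eqP ea]; first by rewrite -ag.
have [c dc hc] := partnerA hV hab; rewrite ag // in hc.
rewrite ea; exact: partnerB hV' hc.
Qed.

Lemma inj_part (n : nat) (s : seq nat) (H H' : seq (nat * nat)) :
  perm_eq s (iota 1 n) -> is_VHC02 s H -> is_VHC02 s H' -> phi s H = phi s H' -> H = H'.
Proof.
move=> ps hV hV' e; have us : uniq s by rewrite (perm_uniq ps) iota_uniq.
have ag := agreeA us hV hV' e.
apply: (@irr_sorted_eq _ (fun h h' : nat * nat => h.1 < h'.1)).
- by move=> x y z /=; apply: ltn_trans.
- by move=> x /=; rewrite ltnn.
- by have := V_sorted hV; rewrite sorted_map.
- by have := V_sorted hV'; rewrite sorted_map.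
- move=> h; apply/idP/idP; first exact: (mem_agree hV hV' ag).
  apply: (mem_agree hV' hV) => a b da; by rewrite ag.
Qed.

Theorem lemma3p1 (n : nat) (s : seq nat) :
  0 < n -> perm_eq s (iota 1 n) ->
  (forall H, is_VHC02 s H -> is_comp (ndesc s).+1 (n - ndesc s) (phi s H)) /\
  (forall H H', is_VHC02 s H -> is_VHC02 s H' -> phi s H = phi s H' -> H = H').
Proof.
move=> n0 ps; split.
- move=> H hV; exact: comp_part.
- move=> H H'; exact: (inj_part ps).
Qed.
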